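(* For every integer $n\ge 1$, the number of Dumont permutations of the second kind of length $2n$ that avoid the pattern $231$ is $2^{n-1}$, i.e. $|\mathfrak D^2_{2n}(231)|=2^{n-1}$.
   Context: A Dumont permutation of the second kind of length $2n$ is a permutation $\pi\in\mathfrak S_{2n}$ such that for every $i=1,\dots,n$ one has $\pi(2i)<2i$ and $\pi(2i-1)\ge 2i-1$ (entries at even positions are deficiencies, entries at odd positions are fixed points or excedances). $\mathfrak D^2_{2n}$ denotes the set of these. A permutation $\sigma$ contains a pattern $\tau\in\mathfrak S_k$ if some subsequence $(\sigma(i_1),\dots,\sigma(i_k))$, $i_1<\dots<i_k$, is order-isomorphic to $\tau$; otherwise $\sigma$ avoids $\tau$. $\mathfrak D^2_{2n}(T)$ denotes the set of permutations in $\mathfrak D^2_{2n}$ avoiding every pattern in $T$. *)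

(* Defs.v *)
From mathcomp Require Import all_boot all_fingroup.
Set Implicit Arguments. Unset Strict Implicit. Unset Printing Implicit Defensive.

(* Index i : 'I_m (0-based) stands for position i+1 and value s i stands
   for value (s i)+1.  So position i+1 is even iff i is odd, and
   pi(i+1) < i+1 iff s i < i. *)

Definition contains_pattern (m k : nat) (sigma : 'S_m) (tau : 'S_k) : bool :=
  [exists f : {ffun 'I_k -> 'I_m},
    [forall a : 'I_k, forall b : 'I_k, (a < b) ==> (f a < f b)] &&
    [forall a : 'I_k, forall b : 'I_k,
       (sigma (f a) < sigma (f b)) == (tau a < tau b)]].

Definition avoids_pattern (m k : nat) (sigma : 'S_m) (tau : 'S_k) : bool :=
  ~~ contains_pattern sigma tau.

(* Dumont permutation of the second kind of length m (= 2n):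
   even positions are deficiencies, odd positions are fixed points or
   excedances. *)
Definition dumont2 (m : nat) (sigma : 'S_m) : bool :=
  [forall i : 'I_m, if odd i then sigma i < i else i <= sigma i].

(* The pattern 231 in 'S_3 (0-based: 1,2,0). *)
Definition pat231_fun (i : 'I_3) : 'I_3 := inord ((i + 1) %% 3).

Lemma pat231_inj : injective pat231_fun.
Proof.
move=> x y; rewrite /pat231_fun => /(congr1 val) /=.
rewrite !inordK ?ltn_mod // => h; apply: val_inj.
by case: x y h => [[|[|[|?]]] ?] [[|[|[|?]]] ?].
Qed.

Definition pat231 : 'S_3 := perm pat231_inj.

Definition D2_avoid231 (n : nat) : {set 'S_(2 * n)} :=
  [set sigma : 'S_(2 * n) | dumont2 sigma & avoids_pattern sigma pat231].

(* Main.v *)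
Require Import Defs.
From mathcomp Require Import all_boot all_fingroup zify.
Set Implicit Arguments. Unset Strict Implicit. Unset Printing Implicit Defensive.

Definition dumontS (s : seq nat) := forall i, i < size s ->
  if odd i then nth 0 s i < i else i <= nth 0 s i.
Definition avoidS (s : seq nat) := forall i j k, i < j -> j < k -> k < size s ->
  ~ ((nth 0 s k < nth 0 s i) /\ (nth 0 s i < nth 0 s j)).
Definition Good (m : nat) (s : seq nat) :=
  [/\ size s = m, (forall i, i < m -> nth 0 s i < m),
      (forall i j, i < m -> j < m -> nth 0 s i = nth 0 s j -> i = j),
      dumontS s & avoidS s].

Lemma good_surj m s v : Good m s -> v < m -> exists2 i, i < m & nth 0 s i = v.
Proof.
case=> Hsz Hlt Hinj _ _ Hv.
have Hu : uniq s.
  apply/(uniqP 0) => i j; rewrite !inE Hsz => Hi Hj; exact: Hinj.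
have Hsub : {subset s <= iota 0 m}.
  move=> x /(nthP 0) [i Hi <-]; rewrite mem_iota /= add0n; apply: Hlt; by rewrite -Hsz.
have [_ Heq] := uniq_min_size Hu Hsub (eq_leq (etrans (size_iota 0 m) (esym Hsz))).
have Hvs : v \in s by rewrite Heq mem_iota.
by exists (index v s); [rewrite -Hsz index_mem | exact: nth_index].
Qed.

Lemma good_bound m s i : Good m s -> 0 < m -> nth 0 s i < m.
Proof.
case=> Hsz Hlt _ _ _ Hm; case: (ltnP i m) => H; first exact: Hlt.
by rewrite nth_default // Hsz.
Qed.

Lemma cases3 m i : i < m.+2 -> [\/ i < m, i = m | i = m.+1].
Proof. move=> H; have : i < m \/ i = m \/ i = m.+1 by lia. by case=> [?|[?|?]]; [constructor 1|constructor 2|constructor 3]. Qed.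

Lemma nthL (s t : seq nat) i : i < size s -> nth 0 (s ++ t) i = nth 0 s i.
Proof. by move=> H; rewrite nth_cat H. Qed.
Lemma nthM (s t : seq nat) a : nth 0 (s ++ a :: t) (size s) = a.
Proof. by rewrite nth_cat ltnn subnn. Qed.
Lemma nthM1 (s t : seq nat) a b : nth 0 (s ++ [:: a, b & t]) (size s).+1 = b.
Proof. by rewrite nth_cat ltnNge leqnSn /= subSnn. Qed.

Definition sw (m x : nat) := if x == m.-1 then m.+1 else if x == m.+1 then m.-1 else x.

Lemma swK m : involutive (sw m).
Proof. move=> x; rewrite /sw; do ! case: eqP; lia. Qed.

Lemma size_split2 (s : seq nat) m : size s = m.+2 ->
  s = take m s ++ [:: nth 0 s m; nth 0 s m.+1].
Proof.
move=> Hs; rewrite -{1}(cat_take_drop m s); congr (_ ++ _).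
apply: (@eq_from_nth _ 0); first by rewrite size_drop Hs /=; lia.
move=> i; rewrite size_drop Hs => Hi; rewrite nth_drop.
case: i Hi => [|[|i]] Hi /=; rewrite ?addn0 ?addn1 //; lia.
Qed.


Lemma nthM' (s t : seq nat) a n : size s = n -> nth 0 (s ++ a :: t) n = a.
Proof. by move=> <-; apply: nthM. Qed.
Lemma nthM1' (s t : seq nat) a b n : size s = n -> nth 0 (s ++ [:: a, b & t]) n.+1 = b.
Proof. by move=> <-; apply: nthM1. Qed.

Lemma swD m x : 0 < m -> x < m -> (x = m.-1 /\ sw m x = m.+1) \/ (x < m.-1 /\ sw m x = x).
Proof. move=> Hm Hx; rewrite /sw; do ! case: eqP; lia. Qed.

Lemma swE2 m x : 0 < m -> x < m.+2 -> x <> m -> x <> m.-1 ->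
  (x = m.+1 /\ sw m x = m.-1) \/ (x < m.-1 /\ sw m x = x).
Proof. move=> Hm Hx H1 H2; rewrite /sw; do ! case: eqP; lia. Qed.

Ltac nths := rewrite ?nthM ?nthM1 ?nthL //.

Lemma goodA m s : ~~ odd m -> 0 < m -> Good m s -> Good m.+2 (s ++ [:: m.+1; m]).
Proof.
move=> Hod Hm G; have B i := good_bound i G Hm.
case: G => Hsz Hlt Hinj Hd Ha; subst m.
split.
- by rewrite size_cat /= addn2.
- move=> i /cases3 [Hi|->|->]; nths; have := B i; lia.
- move=> i j /cases3 Hi /cases3 Hj.
  move: (B i) (B j).
  case: Hi => Hi; try subst i; case: Hj => Hj; try subst j; nths => Bi Bj E;
    first [by apply: Hinj | lia].
- move=> i; rewrite size_cat /= addn2 => /cases3 [Hi|->|->].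
  + by nths; apply: Hd.
  + by nths; rewrite (negbTE Hod).
  + by nths; rewrite /= Hod.
- move=> i j k Hij Hjk; rewrite size_cat /= addn2 => Hk.
  have Hj : j < (size s).+2 by lia.
  have Hi : i < (size s).+2 by lia.
  move: (B i) (B j) (B k).
  case: (cases3 Hk) => Hk'; try subst k; case: (cases3 Hj) => Hj'; try subst j;
    case: (cases3 Hi) => Hi'; try subst i; try lia; nths => Bi Bj Bk;
    first [exact: (Ha i j k) | lia].
Qed.

Lemma goodB m s : ~~ odd m -> 0 < m -> Good m s -> Good m.+2 (map (sw m) s ++ [:: m; m.-1]).
Proof.
move=> Hod Hm G; have B i := good_bound i G Hm.
case: G => Hsz Hlt Hinj Hd Ha; subst m.
have Hs' : size (map (sw (size s)) s) = size s := size_map _ _.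
have S i : i < size s -> nth 0 (map (sw (size s)) s ++ [:: size s; (size s).-1]) i
    = sw (size s) (nth 0 s i).
  by move=> Hi; rewrite nthL ?Hs' // (nth_map 0).
have M : nth 0 (map (sw (size s)) s ++ [:: size s; (size s).-1]) (size s) = size s.
  exact: nthM'.
have M1 : nth 0 (map (sw (size s)) s ++ [:: size s; (size s).-1]) (size s).+1 = (size s).-1.
  exact: nthM1'.
have W i := swD Hm (B i).
split.
- by rewrite size_cat Hs' /= addn2.
- move=> i /cases3 [Hi|->|->]; rewrite ?M ?M1 ?S //; try lia.
  have := W i; lia.
- move=> i j /cases3 Hi /cases3 Hj.
  move: (W i) (W j).
  case: Hi => Hi; try subst i; case: Hj => Hj; try subst j; rewrite ?M ?M1 ?S // => Bi Bj E;
    first [by apply: Hinj => //; apply: (can_inj (swK (size s))) | lia].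
- move=> i; rewrite size_cat Hs' /= addn2 => /cases3 [Hi|->|->].
  + rewrite S //; have := Hd i Hi; have := W i; case: (odd i); lia.
  + by rewrite M (negbTE Hod).
  + by rewrite M1 /= Hod; lia.
- move=> i j k Hij Hjk; rewrite size_cat Hs' /= addn2 => Hk.
  have Hj : j < (size s).+2 by lia.
  have Hi : i < (size s).+2 by lia.
  move: (W i) (W j) (W k).
  case: (cases3 Hk) => Hk'; try subst k; case: (cases3 Hj) => Hj'; try subst j;
    case: (cases3 Hi) => Hi'; try subst i; try lia; rewrite ?M ?M1 ?S // => Wi Wj Wk;
    first [lia | move=> [H1 H2]; apply: (Ha i j k) => //; lia].
Qed.


Lemma goodC m s : ~~ odd m -> 0 < m -> Good m.+2 s ->
  (exists2 s', Good m s' & s = s' ++ [:: m.+1; m]) \/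
  (exists2 s', Good m s' & s = map (sw m) s' ++ [:: m; m.-1]).
Proof.
move=> Hod Hm G; have B i := good_bound i G (ltn0Sn m.+1).
have Gs := G.
case: G => Hsz Hlt Hinj Hd Ha.
have Hs := size_split2 Hsz.
have Hts : size (take m s) = m by rewrite size_take Hsz ltnS leqnSn.
have T i : i < m -> nth 0 (take m s) i = nth 0 s i by move=> Hi; rewrite nth_take.
have Hxm : m <= nth 0 s m.
  by have := Hd m; rewrite Hsz (negbTE Hod) => /(_ (ltnW (ltnSn _))).
have Hy1 : nth 0 s m.+1 < m.+1.
  by have := Hd m.+1; rewrite Hsz /= Hod => /(_ (ltnSn _)).
have Hxy : nth 0 s m <> nth 0 s m.+1.
  by move=> /(Hinj _ _ (ltnW (ltnSn _)) (ltnSn _)); lia.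
have Hx := B m.
have NI i : i < m -> nth 0 s i <> nth 0 s m /\ nth 0 s i <> nth 0 s m.+1.
  move=> Hi; split => E.
    by have := Hinj _ _ (ltn_trans Hi (ltnW (ltnSn _))) (ltnW (ltnSn _)) E; lia.
  by have := Hinj _ _ (ltn_trans Hi (ltnW (ltnSn _))) (ltnSn _) E; lia.
have [Ex|Ex] : nth 0 s m = m.+1 \/ nth 0 s m = m by lia.
- left.
  have Ey : nth 0 s m.+1 = m.
    case: (good_surj Gs (v := m) (ltnW (ltnSn _))) => q Hq Eq.
    case: (cases3 Hq) => Hq'; try (subst q; lia).
    have := NI q Hq'; have := Ha q m m.+1 Hq' (ltnSn _) ltac:(by rewrite Hsz).
    lia.
  exists (take m s); last by rewrite {1}Hs Ex Ey.
  split => //.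
  + move=> i Hi; rewrite T //; have := NI i Hi; have := B i; lia.
  + move=> i j Hi Hj; rewrite !T //; apply: Hinj; lia.
  + move=> i; rewrite Hts => Hi; rewrite T //; apply: Hd; lia.
  + move=> i j k Hij Hjk; rewrite Hts => Hk; rewrite !T //; try lia.
    apply: Ha => //; lia.
- right.
  have Ey : nth 0 s m.+1 = m.-1.
    case: (good_surj Gs (v := m.-1) ltac:(lia)) => q Hq Eq.
    case: (cases3 Hq) => Hq'; try (subst q; lia).
    have := NI q Hq'; have := Ha q m m.+1 Hq' (ltnSn _) ltac:(by rewrite Hsz).
    lia.
  exists (map (sw m) (take m s)); last by rewrite (mapK (swK m)) {1}Hs Ex Ey.
  have S i : i < m -> nth 0 (map (sw m) (take m s)) i = sw m (nth 0 s i).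
    by move=> Hi; rewrite (nth_map 0) ?Hts // T.
  have W i : i < m -> (nth 0 s i = m.+1 /\ sw m (nth 0 s i) = m.-1) \/
                      (nth 0 s i < m.-1 /\ sw m (nth 0 s i) = nth 0 s i).
    move=> Hi; apply: swE2 => //; have := NI i Hi; lia.
  split.
  + by rewrite size_map.
  + move=> i Hi; rewrite S //; have := W i Hi; lia.
  + move=> i j Hi Hj; rewrite !S // => /(can_inj (swK m)); apply: Hinj; lia.
  + move=> i; rewrite size_map Hts => Hi; rewrite S //.
    have := Hd i ltac:(lia); have := W i Hi; case: (odd i); lia.
  + move=> i j k Hij Hjk; rewrite size_map Hts => Hk; rewrite !S //; try lia.
    have := W i ltac:(lia); have := W j ltac:(lia); have := W k Hk.
    move=> Wk Wj Wi [H1 H2]; apply: (Ha i j k) => //; try lia.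
Qed.


Lemma good2 s : Good 2 s <-> s = [:: 1; 0].
Proof.
split.
- case=> Hsz Hlt Hinj Hd Ha.
  case: s Hsz Hlt Hinj Hd Ha => [|a [|b [|c s]]] //= _ Hlt Hinj Hd _.
  have := Hd 1 isT; have := Hlt 0 isT; have := Hinj 0 1 isT isT => /=.
  move=> H1 H2 H3; have Hb : b = 0 by lia.
  subst b; have Ha : a = 1 by (have : a <> 0 by move=> E; subst a; have := H1 erefl); lia.
  by subst a.
- move=> ->; split => //.
  + by case=> [|[|i]].
  + by case=> [|[|i]] [|[|j]].
  + by case=> [|[|i]].
  + move=> i j k Hij Hjk /= Hk; lia.
Qed.

Fixpoint L (n : nat) : seq (seq nat) :=
  match n with
  | 0 => [:: [:: 1; 0]]
  | n'.+1 => let m := 2 * n in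
      [seq s ++ [:: m.+1; m] | s <- L n'] ++ [seq map (sw m) s ++ [:: m; m.-1] | s <- L n']
  end.

Lemma L_spec n : (forall s, s \in L n <-> Good (2 * n.+1) s) /\ uniq (L n) /\ size (L n) = 2 ^ n.
Proof.
elim: n => [|n [IHm [IHu IHs]]].
  split; last by [].
  by move=> s; rewrite good2 inE; split => /eqP.
have Em : 2 * n.+2 = (2 * n.+1).+2 by lia.
have Hod : ~~ odd (2 * n.+1) by rewrite mul2n odd_double.
have Hm : 0 < 2 * n.+1 by lia.
have SZ s : s \in L n -> size s = 2 * n.+1 by move=> /IHm [].
rewrite /L -/L; set m := 2 * n.+1.
split; [|split].
- move=> s; rewrite Em mem_cat; split.
  + case/orP => /mapP [s' Hs' ->].
      by apply: goodA => //; apply/IHm.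
    by apply: goodB => //; apply/IHm.
  + move/(goodC Hod Hm) => [[s' Hs' ->]|[s' Hs' ->]]; apply/orP; [left|right];
      apply/mapP; exists s' => //; exact/IHm.
- rewrite cat_uniq; apply/and3P; split.
  + rewrite map_inj_in_uniq // => s1 s2 H1 H2 /eqP.
    by rewrite eqseq_cat ?SZ // => /andP [/eqP].
  + apply/hasPn => x /mapP [s' Hs' ->]; apply/mapP => [[s'' Hs'' E]].
    have := congr1 (fun t => nth 0 t m) E.
    have E1 : size (map (sw m) s') = m by rewrite size_map SZ.
    by rewrite (nthM' _ _ E1) (nthM' _ _ (SZ _ Hs'')); lia.
  + rewrite map_inj_in_uniq // => s1 s2 H1 H2 /eqP.
    rewrite eqseq_cat ?size_map ?SZ // => /andP [/eqP E _].
    by rewrite -(mapK (swK m) s1) E mapK //; apply: swK.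
- by rewrite size_cat !size_map IHs expnS mul2n addnn.
Qed.


Definition phi m (s : 'S_m) : seq nat := [seq val (s i) | i <- enum 'I_m].

Lemma size_phi m (s : 'S_m) : size (phi s) = m.
Proof. by rewrite size_map size_enum_ord. Qed.

Lemma nth_phi m (s : 'S_m) (x : 'I_m) : nth 0 (phi s) x = s x.
Proof.
rewrite (nth_map x) ?size_enum_ord //; congr (val (s _)); apply: val_inj.
exact: nth_enum_ord.
Qed.

Lemma phi_inj m : injective (@phi m).
Proof. by move=> s t E; apply/permP => x; apply: ord_inj; rewrite -!nth_phi E. Qed.

Lemma phi_surj m s : Good m s -> exists sg : 'S_m, phi sg = s.
Proof.
case=> Hsz Hlt Hinj _ _.
pose f (i : 'I_m) : 'I_m := insubd i (nth 0 s i).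
have fv i : val (f i) = nth 0 s i by rewrite val_insubd /= Hlt.
have finj : injective f.
  move=> i j /(congr1 val); rewrite !fv => /Hinj E; apply: val_inj; exact: E.
exists (perm finj); apply: (@eq_from_nth _ 0); first by rewrite size_phi.
move=> i; rewrite size_phi => Hi.
change i with (nat_of_ord (Ordinal Hi)).
by rewrite nth_phi permE fv.
Qed.

Lemma patv (a : 'I_3) : val (pat231 a) = (a.+1) %% 3.
Proof. rewrite /pat231 permE /pat231_fun addn1; apply: inordK; by rewrite ltn_mod. Qed.

Lemma dumont_phi m (sg : 'S_m) : dumont2 sg <-> dumontS (phi sg).
Proof.
split.
- move/forallP => H i; rewrite size_phi => Hi.
  by have := H (Ordinal Hi); rewrite -nth_phi /=.
- move=> H; apply/forallP => x; have := H x; rewrite size_phi nth_phi; apply; exact: ltn_ord.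
Qed.

Lemma avoid_phi m (sg : 'S_m) : avoids_pattern sg pat231 <-> avoidS (phi sg).
Proof.
split.
- move=> Hav i j k Hij Hjk; rewrite size_phi => Hk [H1 H2].
  move/negP: Hav; apply.
  have Hj : j < m by lia.
  have Hi : i < m by lia.
  move: H1 H2.
  rewrite -[i]/(nat_of_ord (Ordinal Hi)) -[j]/(nat_of_ord (Ordinal Hj)) -[k]/(nat_of_ord (Ordinal Hk)) !nth_phi.
  move=> H1 H2.
  apply/existsP; exists [ffun a : 'I_3 => if val a == 0 then Ordinal Hi
      else if val a == 1 then Ordinal Hj else Ordinal Hk].
  apply/andP; split; apply/forallP => a; apply/forallP => b; rewrite !ffunE ?patv;
    case: a => [[|[|[|a]]] Ha] //; case: b => [[|[|[|b]]] Hb] //=; apply/eqP; lia.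
- move=> Hav; apply/negP => /existsP [f /andP [/forallP Hinc /forallP Hord]].
  pose a0 := @Ordinal 3 0 isT; pose a1 := @Ordinal 3 1 isT; pose a2 := @Ordinal 3 2 isT.
  move: (Hinc a0) => /forallP /(_ a1) /= H01.
  move: (Hinc a1) => /forallP /(_ a2) /= H12.
  move: (Hord a2) => /forallP /(_ a0); rewrite !patv /= => /eqP H20.
  move: (Hord a0) => /forallP /(_ a1); rewrite !patv /= => /eqP H01'.
  apply: (Hav (f a0) (f a1) (f a2)) => //; first by rewrite size_phi.
  by rewrite !nth_phi H20 H01'.
Qed.

Lemma good_phi m (sg : 'S_m) : Good m (phi sg) <-> dumont2 sg && avoids_pattern sg pat231.
Proof.
split.
- case=> _ _ _ /dumont_phi -> /avoid_phi ->. by [].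
- move=> /andP [/dumont_phi Hd /avoid_phi Ha]; split => //.
  + exact: size_phi.
  + move=> i Hi; rewrite -[i]/(nat_of_ord (Ordinal Hi)) nth_phi; exact: ltn_ord.
  + move=> i j Hi Hj; rewrite -[i]/(nat_of_ord (Ordinal Hi)) -[j]/(nat_of_ord (Ordinal Hj)) !nth_phi.
    by move=> /val_inj /perm_inj [].
Qed.

Theorem theorem2p2 (n : nat) : 1 <= n -> #|D2_avoid231 n| = 2 ^ (n - 1).
Proof.
case: n => [|n] // _; rewrite subn1 /=.
have [Hm [Hu Hs]] := L_spec n.
rewrite -Hs cardE -(size_map (@phi _)); apply: perm_size; apply: uniq_perm => //.
  by rewrite map_inj_uniq ?enum_uniq //; apply: phi_inj.
move=> s; apply/idP/idP.
- move/mapP => [sg Hsg ->]; apply/Hm/good_phi.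
  by move: Hsg; rewrite mem_enum inE.
- move/Hm => G; have [sg Esg] := phi_surj G; apply/mapP; exists sg => //.
  by rewrite mem_enum inE; apply/good_phi; rewrite Esg.
Qed.
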